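(* Let $m\ge2$, $n=2m+1$, $A_i$ ($i=2,\dots,m$) and $B$ as follows: $A_i=E_i+E_{m+i}+E_{i-1,n}+E_{m+i-1,n}$ for $2\le i\le m-1$, $A_m=E_m-E_{2m}+E_{m-1,n}+E_{2m-1,n}$, $B=I_{m+1}\oplus0_m$. Let $i\in\{1,\dots,m\}$ and let $(Y_1,\dots,Y_i)$ be a strict facial reduction sequence for $\mathcal S^n_+$ all of whose members lie in $\operatorname{lin}\{B,A_2,\dots,A_m\}$. Then $$\mathcal S^n_+\cap Y_1^\perp\cap\dots\cap Y_i^\perp=0_{m+i}\oplus\mathcal S^{m-i+1}_+ .$$
   Context: $E_{ij}\in\mathcal S^n$ has only nonzero entries $1$ in positions $(i,j),(j,i)$; $E_i:=E_{ii}$; orthogonality is with respect to $S\bullet T=\operatorname{trace}(ST)$. For a closed convex cone $K$, $K^*=\{y:\langle y,x\rangle\ge0\ \forall x\in K\}$. A facial reduction sequence for $K$ is $(y_1,\dots,y_k)$ such that, with $F_0=K$ and $F_j=F_{j-1}\cap y_j^\perp$, $y_j\in F_{j-1}^*$ for all $j$; it is strict if moreover $y_j\notin F_{j-1}^\perp$ for all $j$. $0_k\oplus\mathcal S^{l}_+$ denotes matrices whose first $k$ rows and columns are zero and whose lower right $l\times l$ block is positive semidefinite. *)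

(* Defs.v *)
From HB Require Import structures.
From mathcomp Require Import all_boot all_order all_algebra.
Set Implicit Arguments. Unset Strict Implicit. Unset Printing Implicit Defensive.
Import Order.TTheory GRing.Theory Num.Theory.
Local Open Scope ring_scope.

Section Defs.
Variable R : rcfType.

Definition symm N (X : 'M[R]_N) : Prop := X^T = X.

Definition psd N (X : 'M[R]_N) : Prop :=
  symm X /\ forall v : 'cV[R]_N, 0 <= (v^T *m X *m v) 0 0.

Definition tdot N (S T : 'M[R]_N) : R := \tr (S *m T).

(* E_{pq} with 1-based positions p q: ones at (p,q) and (q,p); E_p := E_{pp}. *)
Definition Emx N (p q : nat) : 'M[R]_N :=
  \matrix_(k, l) ((((k.+1 == p) && (l.+1 == q)) || ((k.+1 == q) && (l.+1 == p)))%:R : R).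

Definition A_mx (m i : nat) : 'M[R]_(m.*2.+1) :=
  let n := m.*2.+1 in
  if i == m then Emx _ m m - Emx _ (m.*2) (m.*2) + Emx _ m.-1 n + Emx _ (m.*2).-1 n
  else Emx _ i i + Emx _ (m + i) (m + i) + Emx _ i.-1 n + Emx _ (m + i).-1 n.

Definition B_mx (m : nat) : 'M[R]_(m.*2.+1) :=
  \matrix_(k, l) (((k == l) && (k < m.+1)%N)%:R : R).

Definition in_lin (m : nat) (Y : 'M[R]_(m.*2.+1)) : Prop :=
  exists (b : R) (c : nat -> R),
    Y = b *: B_mx m + \sum_(2 <= k < m.+1) c k *: A_mx m k.

Definition dualc N (F : 'M[R]_N -> Prop) (Y : 'M[R]_N) : Prop :=
  symm Y /\ forall X, F X -> 0 <= tdot Y X.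
Definition perpc N (F : 'M[R]_N -> Prop) (Y : 'M[R]_N) : Prop :=
  symm Y /\ forall X, F X -> tdot Y X = 0.

Definition face N (Ys : seq 'M[R]_N) (X : 'M[R]_N) : Prop :=
  psd X /\ forall Y, Y \in Ys -> tdot Y X = 0.

Definition strict_frs N (Ys : seq 'M[R]_N) : Prop :=
  forall j, (j < size Ys)%N ->
    dualc (face (take j Ys)) (nth 0 Ys j) /\
    ~ perpc (face (take j Ys)) (nth 0 Ys j).

(* lower-right block of X : 'M_(N+1) starting at (0-based) index k *)
Definition lowblock N (k : nat) (X : 'M[R]_N.+1) : 'M[R]_(N.+1 - k) :=
  \matrix_(a, b) X (inord (k + a)) (inord (k + b)).

Definition zero_oplus_psd N (k : nat) (X : 'M[R]_N.+1) : Prop :=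
  (forall a b : 'I_N.+1, ((a < k)%N || (b < k)%N) -> X a b = 0) /\
  psd (lowblock k X).

End Defs.

(* Main.v *)
Require Import Defs.
From HB Require Import structures.
From mathcomp Require Import all_boot all_order all_algebra zify ring lra.
Import Order.TTheory GRing.Theory Num.Theory.
Local Open Scope ring_scope.
Set Implicit Arguments. Unset Strict Implicit.

Section G.
Variable R : rcfType.

Definition qf n (Y : 'M[R]_n) (v : 'cV[R]_n) := (v^T *m Y *m v) 0 0.

Lemma quadE n (Y : 'M[R]_n) v :
  qf Y v = \sum_b (\sum_a v a 0 * Y a b) * v b 0.
Proof. rewrite /qf mxE; apply: eq_bigr => b _; rewrite mxE; congr (_ * _).
by apply: eq_bigr => a _; rewrite mxE. Qed.

Lemma tdotE n (Y X : 'M[R]_n) : tdot Y X = \sum_a \sum_b Y a b * X b a.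
Proof. rewrite /tdot /mxtrace; apply: eq_bigr => a _; by rewrite mxE. Qed.

Lemma qf_delta n (X : 'M[R]_n) a b :
  (delta_mx 0 a *m X *m delta_mx b 0 : 'M[R]_1) 0 0 = X a b.
Proof. by rewrite -rowE -colE !mxE. Qed.

Lemma qf_delta' n (X : 'M[R]_n) a b :
  (delta_mx 0 a *m X *m delta_mx b 0 : 'M[R]_1) = (X a b)%:M.
Proof. apply/matrixP => i j; rewrite !ord1 qf_delta !mxE /= mulr1n. done. Qed.

Lemma qf2 n (X : 'M[R]_n) a b x y : symm X ->
  qf X (x *: delta_mx a 0 + y *: delta_mx b 0) =
  x * x * X a a + 2 * x * y * X a b + y * y * X b b.
Proof.
move=> hs.
have hab : X b a = X a b by rewrite -{1}hs mxE.
rewrite /qf. have -> : (x *: delta_mx a 0 + y *: delta_mx b 0)^T = x *: delta_mx 0 a + y *: (delta_mx 0 b : 'rV[R]_n).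
  by apply/matrixP => i j; rewrite !mxE; case: (i == 0) (j == a) (j == b) => [] [] [].
rewrite /qf.
rewrite !mulmxDl !mulmxDr -!scalemxAl -!scalemxAr !qf_delta' !mxE /= !mulr1n hab.
ring.
Qed.

Lemma qf_zero n (Y : 'M[R]_n) a b : symm Y ->
  (forall x y, 0 <= qf Y (x *: delta_mx a 0 + y *: delta_mx b 0)) ->
  Y a a = 0 -> Y a b = 0.
Proof.
move=> hs hq h0.
have hd := hq 0 1; rewrite qf2 // h0 in hd.
have hc := hq (- (Y b b + 1)) (Y a b); rewrite qf2 // h0 in hc.
have : Y a b * Y a b <= 0 by nra.
move=> hle; apply/eqP; rewrite -sqrf_eq0 eq_le sqr_ge0 andbT expr2 //.
Qed.


Lemma psd_zero_row n (X : 'M[R]_n) a b : psd X -> X a a = 0 -> X a b = 0.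
Proof. move=> [hs hq] h0; apply: qf_zero => // x y; exact: hq. Qed.

Definition Zf n k (X : 'M[R]_n) := psd X /\ forall a : 'I_n, (a < k)%N -> X a a = 0.

Lemma Zf_zero n k (X : 'M[R]_n) (a b : 'I_n) : Zf k X -> ((a < k) || (b < k))%N -> X a b = 0.
Proof.
move=> [hp hd] /orP [h|h]; first by apply: psd_zero_row => //; exact: hd.
have hs := hp.1. rewrite -hs mxE. by apply: psd_zero_row => //; exact: hd.
Qed.

Lemma vvT_psd n (v : 'cV[R]_n) : psd (v *m v^T).
Proof.
split; first by rewrite /symm trmx_mul trmxK.
move=> w. rewrite !mulmxA -(mulmxA _ v^T).
rewrite mxE big_ord1.
have -> : (v^T *m w) 0 0 = (w^T *m v) 0 0.
  by rewrite -(trmxK (v^T *m w)) trmx_mul trmxK mxE.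
by rewrite -expr2 sqr_ge0.
Qed.

Lemma vvT_diag n (v : 'cV[R]_n) a : (v *m v^T) a a = v a 0 * v a 0.
Proof. by rewrite mxE big_ord1 mxE. Qed.

Lemma tdot_vvT n (Y : 'M[R]_n) v : tdot Y (v *m v^T) = qf Y v.
Proof.
rewrite /tdot mulmxA mxtrace_mulC /qf mulmxA /mxtrace big_ord1 //.
Qed.

Lemma tdot0 n (Y X : 'M[R]_n) : (forall a b, Y a b = 0 \/ X b a = 0) -> tdot Y X = 0.
Proof.
move=> h; rewrite tdotE big1 // => a _; rewrite big1 // => b _.
by case: (h a b) => ->; rewrite ?mul0r ?mulr0.
Qed.

Lemma tdot_diag n (Y X : 'M[R]_n) : (forall a b, a != b -> Y a b * X b a = 0) ->
  tdot Y X = \sum_a Y a a * X a a.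
Proof.
move=> h; rewrite tdotE; apply: eq_bigr => a _.
rewrite (bigD1 a) //= big1 ?addr0 // => b hb; apply: h; by rewrite eq_sym.
Qed.

Lemma sum_shift N k (F : 'I_N.+1 -> R) : (k <= N.+1)%N ->
  (forall i : 'I_N.+1, (i < k)%N -> F i = 0) ->
  \sum_i F i = \sum_(a < N.+1 - k) F (inord (k + a)).
Proof.
move=> hk h.
have -> : \sum_i F i = \sum_(i < N.+1) F (inord i) by apply: eq_bigr => i _; rewrite inord_val.
rewrite -(big_mkord xpredT (fun i => F (inord i))).
rewrite (big_cat_nat (leq0n k) hk) /=.
rewrite big_nat big1 ?add0r; last first.
  move=> i /andP [_ hi]; apply: h; rewrite inordK //; lia.
rewrite -{1}(add0n k) big_addn -(big_mkord xpredT (fun a => F (inord (k + a)))).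
by apply: eq_bigr => i _; rewrite addnC.
Qed.


Definition col_lower N k (v : 'cV[R]_N.+1) : 'cV[R]_(N.+1 - k) :=
  \col_a v (inord (k + a)) 0.
Definition embed N k (w : 'cV[R]_(N.+1 - k)) : 'cV[R]_N.+1 :=
  \col_i \sum_(a < N.+1 - k | (k + a == i)%N) w a 0.

Lemma col_lower_embed N k w : col_lower k (@embed N k w) = w.
Proof.
apply/matrixP => a j; rewrite !ord1 !mxE.
have ha : (k + a < N.+1)%N by have := ltn_ord a; lia.
rewrite inordK // (eq_bigl (fun a' => a' == a)) ?big_pred1_eq // => a'.
by rewrite eqn_add2l.
Qed.

Lemma block_qf N k (X : 'M[R]_N.+1) v : (k <= N.+1)%N ->
  (forall a b : 'I_N.+1, ((a < k) || (b < k))%N -> X a b = 0) ->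
  qf X v = qf (lowblock k X) (col_lower k v).
Proof.
move=> hk hX; rewrite !quadE.
rewrite (@sum_shift N k) //; last first.
  by move=> b hb; rewrite big1 ?mul0r // => a _; rewrite hX ?mulr0 // hb orbT.
apply: eq_bigr => b _; rewrite mxE; congr (_ * _).
rewrite (@sum_shift N k) //; last by move=> a ha; rewrite hX ?mulr0 // ha.
by apply: eq_bigr => a _; rewrite !mxE.
Qed.

Lemma low_ex N k (a : 'I_N.+1) : (k <= a)%N ->
  exists a' : 'I_(N.+1 - k), a = inord (k + a').
Proof.
move=> h.
have h' : (a - k < N.+1 - k)%N by have := ltn_ord a; lia.
exists (Ordinal h'); apply: val_inj; rewrite /= inordK /=; lia.
Qed.

Lemma Zf_zop N k (X : 'M[R]_N.+1) : (k <= N.+1)%N ->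
  Zf k X <-> zero_oplus_psd k X.
Proof.
move=> hk; split.
- move=> hZ; have hz := Zf_zero hZ.
  split; first by move=> a b; exact: hz.
  split.
    apply/matrixP => a b; rewrite !mxE.
    by rewrite -{1}hZ.1.1 mxE.
  move=> w; rewrite -/(qf _ _) -{1}(col_lower_embed w) -block_qf //.
  exact: hZ.1.2.
- move=> [hz [hs hq]]; split; last by move=> a ha; apply: hz; rewrite ha.
  split.
    apply/matrixP => a b; rewrite mxE.
    case: (boolP ((a < k) || (b < k))%N) => h.
      by rewrite !hz // orbC.
    have [ha hb] : (k <= a /\ k <= b)%N by lia.
    have [a' ->] := low_ex ha; have [b' ->] := low_ex hb.
    have := congr1 (fun M : 'M[R]_(N.+1 - k) => M b' a') hs; rewrite !mxE => <-. done.
  move=> v; rewrite -/(qf _ _) (block_qf _ hk) //; exact: hq.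
Qed.


Ltac kill := repeat match goal with |- context [ nat_of_bool ?b ] =>
  first [ have -> : b = false by lia | have -> : b = true by lia ] end.

Lemma A1 m l : (2 <= l <= m)%N -> A_mx R m l (@ord_max m.*2) ord_max = 0 :> R.
Proof.
move=> hl; rewrite /A_mx; case: ifP => hlm; rewrite !mxE /=; kill; rewrite /=; ring.
Qed.

Lemma A2 m l k (u : 'I_(m.*2.+1)) : (2 <= l <= m)%N -> (2 <= k <= m)%N ->
  val u = (m + k - 2)%N -> A_mx R m l u ord_max = (l == k)%:R :> R.
Proof.
move=> hl hk /= hu; rewrite /A_mx; case: ifP => hlm; rewrite !mxE /=;
  case: (boolP (l == k)) => hlk; kill; rewrite /=; ring.
Qed.

Lemma A3 m l j (a b : 'I_(m.*2.+1)) : (2 <= l <= j)%N -> (j <= m)%N ->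
  (m + j - 1 <= a)%N -> (m + j - 1 <= b)%N -> ~~ ((val a == m + j - 1) && (val b == m + j - 1))%N ->
  A_mx R m l a b = 0 :> R.
Proof.
move=> hl hj ha hb /= hab; rewrite /A_mx; case: ifP => hlm; rewrite !mxE /=; kill; rewrite /=; ring.
Qed.


Section Lin.
Variable m : nat.
Hypothesis hm : (2 <= m)%N.
Local Notation n := (m.*2.+1).
Variables (be : R) (c : nat -> R).
Let Y : 'M[R]_n := be *: B_mx R m + \sum_(2 <= k < m.+1) c k *: A_mx R m k.

Lemma lin_entry (a a' : 'I_n) :
  Y a a' = be * B_mx R m a a' + \sum_(2 <= k < m.+1) c k * A_mx R m k a a'.
Proof.
rewrite /Y !mxE summxE; congr (_ + _); apply: eq_bigr => k _; by rewrite mxE.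
Qed.

Lemma LY1 : Y ord_max ord_max = 0.
Proof.
rewrite lin_entry !mxE /=.
rewrite (_ : (m.*2 < m.+1)%N = false) ?andbF ?mulr0 ?add0r; last by lia.
rewrite big_nat big1 // => k /andP [hk1 hk2].
by rewrite A1 ?mulr0 // hk1 /=; lia.
Qed.

Lemma LY2 k (u : 'I_n) : (2 <= k <= m)%N -> val u = (m + k - 2)%N -> Y u ord_max = c k.
Proof.
move=> hk hu; rewrite lin_entry !mxE /=.
rewrite (_ : (u == ord_max) = false) ?andFb ?mulr0 ?add0r; last first.
  apply/negbTE; rewrite -val_eqE /= hu; lia.
rewrite (bigD1_seq k) /= ?iota_uniq ?mem_index_iota; last by lia.
rewrite (@A2 m k k u hk hk hu) eqxx mulr1.
rewrite big_seq_cond big1 ?addr0 // => l /andP [hl1 hl2].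
rewrite mem_index_iota in hl1.
rewrite (@A2 m l k u) ?(negbTE hl2) ?mulr0 //; try lia. lia.
Qed.

Lemma LY3 j (a b : 'I_n) : (2 <= j <= m)%N ->
  (forall l, (j < l <= m)%N -> c l = 0) ->
  (m + j - 1 <= a)%N -> (m + j - 1 <= b)%N ->
  ~~ ((val a == m + j - 1) && (val b == m + j - 1))%N -> Y a b = 0.
Proof.
move=> hj hc ha hb hab; rewrite lin_entry !mxE /=.
rewrite (_ : (a < m.+1)%N = false) ?andbF ?mulr0 ?add0r; last by lia.
rewrite big_nat big1 // => l /andP [hl1 hl2].
case: (leqP l j) => hlj.
  by rewrite (@A3 m l j) ?mulr0 //; lia.
by rewrite hc ?mul0r //; lia.
Qed.

Lemma LYs1 (a b : 'I_n) : (forall l, (2 <= l <= m)%N -> c l = 0) ->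
  Y a b = be * B_mx R m a b.
Proof.
move=> hc; rewrite lin_entry big_nat big1 ?addr0 // => l /andP [hl1 hl2].
by rewrite hc ?mul0r //; lia.
Qed.

End Lin.


Lemma dsupp n (w u a : 'I_n) (x y : R) p : (a < p)%N -> (p <= w)%N -> (p <= u)%N ->
  (x *: delta_mx w 0 + y *: delta_mx u 0 : 'cV[R]_n) a 0 = 0.
Proof.
move=> ha hw hu; rewrite !mxE.
have -> : (a == w) = false by apply/negbTE; rewrite -val_eqE /=; lia.
have -> : (a == u) = false by apply/negbTE; rewrite -val_eqE /=; lia.
by rewrite /= !mulr0n !mulr0 addr0.
Qed.

Lemma face_rcons n (s : seq 'M[R]_n) Y X :
  face (rcons s Y) X <-> face s X /\ tdot Y X = 0.
Proof.
split.
- move=> [hp h]; split; last by apply: h; rewrite mem_rcons mem_head.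
  by split => // Z hZ; apply: h; rewrite mem_rcons in_cons hZ orbT.
- move=> [[hp h] ht]; split => // Z; rewrite mem_rcons in_cons => /orP [/eqP ->|hZ] //.
  exact: h.
Qed.

Lemma e1 (z : R) : 1 * 1 * z + 2 * 1 * 0 * z + 0 * 0 * z = z.
Proof. ring. Qed.

Section Steps.
Variable m : nat.
Hypothesis hm : (2 <= m)%N.
Local Notation n := (m.*2.+1).

Lemma stepj j (Y : 'M[R]_n) (F : 'M[R]_n -> Prop) : (1 <= j)%N -> (j < m)%N ->
  in_lin Y -> (forall X, F X <-> Zf (m + j) X) -> dualc F Y -> ~ perpc F Y ->
  forall X, (F X /\ tdot Y X = 0) <-> Zf (m + j.+1) X.
Proof.
move=> hj1 hjm [be [c hY]] hF [hs hd] hnp.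
have hq : forall v : 'cV_n, (forall a : 'I_n, (a < m + j)%N -> v a 0 = 0) -> 0 <= qf Y v.
  move=> v hv; rewrite -tdot_vvT; apply: hd; apply/hF; split; first exact: vvT_psd.
  by move=> a ha; rewrite vvT_diag hv ?mulr0.
have hc : forall l, (j.+1 < l <= m)%N -> c l = 0.
  move=> l hl; pose u : 'I_n := inord (m + l - 2).
  have hu : val u = (m + l - 2)%N by rewrite /u /= inordK //; lia.
  have e2 := @LY2 m hm be c l u; rewrite -hY in e2.
  have hl2 : (2 <= l <= m)%N by lia.
  rewrite -(e2 hl2 hu).
  rewrite -{1}hs mxE; apply: qf_zero => //; last by have := @LY1 m hm be c; rewrite -hY.
  by move=> x y; apply: hq => a ha; apply: (dsupp _ _ ha); rewrite ?hu /=; lia.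
pose pp : 'I_n := inord (m + j).
have hpp : val pp = (m + j)%N by rewrite /pp /= inordK //; lia.
have hsh : forall a b : 'I_n, (m + j <= a)%N -> (m + j <= b)%N ->
    ~~ ((val a == m + j) && (val b == m + j))%N -> Y a b = 0.
  move=> a b ha hb hab; rewrite hY; apply: (@LY3 m hm be c j.+1) => //; try lia.
have hneq : forall a : 'I_n, a != pp -> val a != (m + j)%N.
  move=> a; apply: contra => /eqP e; apply/eqP/val_inj; by rewrite /= e hpp.
have htd : forall X, Zf (m + j) X -> tdot Y X = Y pp pp * X pp pp.
  move=> X hX; rewrite tdot_diag; last first.
    move=> a b hab; case: (boolP ((a < m + j) || (b < m + j))%N) => h.
      by rewrite (Zf_zero hX) ?mulr0 // orbC.
    rewrite hsh ?mul0r //; try lia.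
    apply/negP => /andP [/eqP e3 /eqP e4]; move/negP: hab; apply; apply/eqP/val_inj; by rewrite e3 e4.
  rewrite (bigD1 pp) //= big1 ?addr0 // => a happ.
  case: (ltnP a (m + j)) => h; first by rewrite (Zf_zero hX) ?mulr0 ?h.
  by rewrite hsh ?mul0r // (negbTE (hneq _ happ)).
have hge : 0 <= Y pp pp.
  have := hq (1 *: delta_mx pp 0 + 0 *: delta_mx pp 0) _.
  rewrite qf2 // e1; apply => a ha; apply: (dsupp _ _ ha); rewrite hpp; lia.
have hpos : 0 < Y pp pp.
  rewrite lt_def hge andbT; apply/eqP => h0; apply: hnp; split => // X hFX.
  by rewrite htd ?h0 ?mul0r //; apply/hF.
move=> X; split.
- move=> [hFX ht]; have hZ := (hF X).1 hFX; rewrite htd // in ht.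
  have hx : X pp pp = 0.
    by move/eqP: ht; rewrite mulf_eq0 (gt_eqF hpos) /= => /eqP.
  split; first exact: hZ.1.
  move=> a ha; case: (ltnP a (m + j)) => h; first by apply: hZ.2.
  have -> : a = pp by apply: val_inj; rewrite /= hpp; lia.
  exact: hx.
- move=> hZ'.
  have hZ : Zf (m + j) X by split; [exact: hZ'.1 | move=> a ha; apply: hZ'.2; lia].
  split; first exact/hF.
  by rewrite htd // hZ'.2 ?mulr0 // hpp; lia.
Qed.



Lemma step1 (Y : 'M[R]_n) (F : 'M[R]_n -> Prop) :
  in_lin Y -> (forall X, F X <-> psd X) -> dualc F Y -> ~ perpc F Y ->
  forall X, (F X /\ tdot Y X = 0) <-> Zf (m + 1) X.
Proof.
move=> [be [c hY]] hF [hs hd] hnp.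
have hq : forall v : 'cV_n, 0 <= qf Y v.
  by move=> v; rewrite -tdot_vvT; apply: hd; apply/hF; exact: vvT_psd.
have hc : forall l, (2 <= l <= m)%N -> c l = 0.
  move=> l hl; pose u : 'I_n := inord (m + l - 2).
  have hu : val u = (m + l - 2)%N by rewrite /u /= inordK //; lia.
  have e2 := @LY2 m hm be c l u; rewrite -hY in e2.
  rewrite -(e2 hl hu).
  rewrite -{1}hs mxE; apply: qf_zero => //; last by have := @LY1 m hm be c; rewrite -hY.
have hYe : forall a b, Y a b = be * B_mx R m a b.
  by move=> a b; rewrite hY; apply: LYs1.
have htd : forall X, tdot Y X = be * \sum_(a < n | (a < m.+1)%N) X a a.
  move=> X; rewrite tdot_diag; last first.
    by move=> a b hab; rewrite hYe !mxE (negbTE hab) /= mulr0n mulr0 mul0r.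
  rewrite mulr_sumr [RHS]big_mkcond; apply: eq_bigr => a _; rewrite hYe !mxE eqxx /=.
  by case: (a < m.+1)%N => /=; rewrite ?mulr1n ?mulr0n ?mulr1 ?mulr0 ?mul0r.
have hge : 0 <= be.
  have := hq (1 *: delta_mx ord0 0 + 0 *: delta_mx ord0 0).
  by rewrite qf2 // e1 hYe !mxE /= mulr1.
have hpos : 0 < be.
  rewrite lt_def hge andbT; apply/eqP => h0; apply: hnp; split => // X hFX.
  by rewrite htd h0 mul0r.
move=> X; split.
- move=> [hFX ht]; have hp := (hF X).1 hFX; rewrite htd in ht.
  have hs0 : \sum_(a < n | (a < m.+1)%N) X a a = 0.
    by move/eqP: ht; rewrite mulf_eq0 (gt_eqF hpos) /= => /eqP.
  split => // a ha; apply: (psumr_eq0P _ hs0); last by lia.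
  move=> b _; have := hp.2 (1 *: delta_mx b 0 + 0 *: delta_mx b 0).
  by rewrite -/(qf _ _) qf2 ?e1 //; case: hp.
- move=> hZ; split; first by apply/hF; exact: hZ.1.
  by rewrite htd big1 ?mulr0 // => a ha; apply: hZ.2; lia.
Qed.

End Steps.

End G.

Unset Implicit Arguments.
Set Strict Implicit.

Theorem claim2 (R : rcfType) (m : nat) (hm : (2 <= m)%N) (i : nat)
  (hi1 : (1 <= i)%N) (him : (i <= m)%N) (Ys : seq 'M[R]_(m.*2.+1))
  (hsize : size Ys = i) (hfrs : strict_frs Ys)
  (hlin : forall Y, Y \in Ys -> in_lin Y) :
  forall X : 'M[R]_(m.*2.+1), face Ys X <-> zero_oplus_psd (m + i) X.
Proof.
have key : forall j, (1 <= j <= i)%N -> forall X, face (take j Ys) X <-> Zf (m + j) X.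
  elim => [|j IH] //; move=> /andP [hj1 hji].
  have hjs : (j < size Ys)%N by rewrite hsize.
  have [hdual hnp] := hfrs j hjs.
  have hlinj := hlin _ (mem_nth 0 hjs).
  move=> X; rewrite (take_nth 0 hjs) face_rcons.
  case: (posnP j) => [j0|jpos].
    subst j; rewrite addn1 in hj1 *.
    have := @step1 R m hm _ _ hlinj _ hdual hnp X; rewrite addn1; apply.
    move=> X'; rewrite take0; split; first by case.
    by move=> h; split => // Y; rewrite in_nil.
  apply: (@stepj R m hm j) => //; first by lia.
  by apply: IH; lia.
move=> X; rewrite -(take_size Ys) key ?hsize; last by lia.
apply: Zf_zop; lia.
Qed.
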